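(* Let $\Sigma=\{\sigma_{\mathbf{a}|\mathbf{x}}\}$ be a no-signaling assemblage of operators acting on $\mathbb{C}^d$. If $\Sigma$ is on the edge of the set of no-signaling assemblages, then $$\sum_{\mathbf{a}|\mathbf{x}}\mathrm{rank}(\sigma_{\mathbf{a}|\mathbf{x}})\le\Big(\prod_{i=1}^n\mathcal{X}_i-1\Big)\Big(\prod_{i=1}^n\mathcal{A}_i\Big)d.$$
   Context: Fix $n\ge 1$, integers $\mathcal{A}_i,\mathcal{X}_i\ge 1$ and $d\ge1$; write $\mathbf{a}|\mathbf{x}=a_1\dots a_n|x_1\dots x_n$ with $a_i\in\{0,\dots,\mathcal{A}_i-1\}$, $x_i\in\{0,\dots,\mathcal{X}_i-1\}$; the sum runs over all such indices. A no-signaling assemblage is a collection of positive semidefinite operators $\sigma_{\mathbf{a}|\mathbf{x}}$ on $\mathbb{C}^d$ with $\sum_{\mathbf{a}}\sigma_{\mathbf{a}|\mathbf{x}}=\rho_B$ for all $\mathbf{x}$ ($\rho_B$ a fixed density operator) and such that for every $I=\{i_1,\dots,i_s\}\subset\{1,\dots,n\}$, $1\le s<n$, the sum $\sum_{a_j:\,j\notin I}\sigma_{\mathbf{a}|\mathbf{x}}$ depends only on $a_{i_k},x_{i_k}$. An LHS assemblage is one of the form $\sigma_{\mathbf{a}|\mathbf{x}}=\sum_j q_j\prod_i p^{(A_i)}_j(a_i|x_i)\rho_j$ with probability weights $q_j$, density operators $\rho_j$ and conditional distributions $p^{(A_i)}_j$. $\Sigma$ is on the edge if any decomposition $\Sigma=\epsilon\Sigma_1+(1-\epsilon)\Sigma_2$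 with $\epsilon\in[0,1]$, $\Sigma_1$ LHS and $\Sigma_2$ no-signaling forces $\epsilon=0$. *)

(* Defs.v *)
From HB Require Import structures.
From mathcomp Require Import all_boot all_order all_algebra.
From mathcomp Require Import reals complex.
Set Implicit Arguments. Unset Strict Implicit. Unset Printing Implicit Defensive.
Import Order.TTheory GRing.Theory Num.Theory.
Local Open Scope ring_scope.

Section Assemblages.
Variable R : realType.
Local Notation C := (R[i]).

Definition adjmx (m k : nat) (M : 'M[C]_(m, k)) : 'M[C]_(k, m) :=
  (map_mx Num.conj M)^T.

(* positive semidefinite operator on C^d ; 0 <= z means z is real and nonneg *)
Definition psd (d : nat) (M : 'M[C]_d) : Prop :=
  adjmx M = M /\ forall v : 'cV[C]_d, 0 <= (adjmx v *m M *m v) 0 0.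

Definition density (d : nat) (M : 'M[C]_d) : Prop := psd M /\ \tr M = 1.

Variables (n : nat) (A X : 'I_n -> nat) (d : nat).

Definition outs := {dffun forall i : 'I_n, 'I_(A i)}.
Definition ins := {dffun forall i : 'I_n, 'I_(X i)}.

Definition assemblage := outs -> ins -> 'M[C]_d.

Definition no_signaling (S : assemblage) : Prop :=
  (forall a x, psd (S a x)) /\
  (exists rhoB : 'M[C]_d, density rhoB /\ forall x, \sum_(a : outs) S a x = rhoB) /\
  (forall I : {set 'I_n}, I != set0 -> I != setT ->
     forall (a a' : outs) (x x' : ins),
       (forall i, i \in I -> a i = a' i /\ x i = x' i) ->
       \sum_(b : outs | [forall i in I, b i == a i]) S b x =
       \sum_(b : outs | [forall i in I, b i == a' i]) S b x').

Definition LHS (S : assemblage) : Prop :=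
  exists (m : nat) (q : 'I_m -> C) (rho : 'I_m -> 'M[C]_d)
         (p : 'I_m -> forall i : 'I_n, 'I_(X i) -> 'I_(A i) -> C),
    [/\ (forall j, 0 <= q j) /\ \sum_j q j = 1,
        (forall j, density (rho j)),
        (forall j i y b, 0 <= p j i y b),
        (forall j i y, \sum_b p j i y b = 1) &
        forall a x, S a x = \sum_j (q j * \prod_i p j i (x i) (a i)) *: rho j].

Definition on_edge (S : assemblage) : Prop :=
  forall (eps : C) (S1 S2 : assemblage),
    0 <= eps <= 1 -> LHS S1 -> no_signaling S2 ->
    (forall a x, S a x = eps *: S1 a x + (1 - eps) *: S2 a x) ->
    eps = 0.

End Assemblages.

(* Main.v *)
From Pilot Require Import Defs.
From HB Require Import structures.
From mathcomp Require Import all_boot all_order all_algebra zify.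
From mathcomp Require Import perm.
From mathcomp Require Import reals complex ring.
Import Order.TTheory GRing.Theory Num.Theory.
Set Implicit Arguments. Unset Strict Implicit. Unset Printing Implicit Defensive.

Module Part1.
Local Open Scope ring_scope.

Section Aux.
Variable R : realType.
Local Notation C := (R[i]).

Lemma adjmxE m k (M : 'M[C]_(m,k)) i j : adjmx M i j = (M j i)^*.
Proof. by rewrite /adjmx !mxE. Qed.

Lemma adjmxD m k (M N : 'M[C]_(m,k)) : adjmx (M + N) = adjmx M + adjmx N.
Proof. by apply/matrixP=> i j; rewrite !(mxE, adjmxE) rmorphD. Qed.

Lemma adjmxN m k (M : 'M[C]_(m,k)) : adjmx (- M) = - adjmx M.
Proof. by apply/matrixP=> i j; rewrite !(mxE, adjmxE) rmorphN. Qed.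

Lemma adjmxB m k (M N : 'M[C]_(m,k)) : adjmx (M - N) = adjmx M - adjmx N.
Proof. by rewrite adjmxD adjmxN. Qed.

Lemma adjmxZ m k (c : C) (M : 'M[C]_(m,k)) : adjmx (c *: M) = c^* *: adjmx M.
Proof. by apply/matrixP=> i j; rewrite !(mxE, adjmxE) rmorphM. Qed.

Lemma adjmxM m k l (M : 'M[C]_(m,k)) (N : 'M[C]_(k,l)) :
  adjmx (M *m N) = adjmx N *m adjmx M.
Proof.
apply/matrixP=> i j; rewrite !(mxE, adjmxE) rmorph_sum; apply: eq_bigr => r _.
by rewrite !adjmxE rmorphM mulrC.
Qed.

Lemma adjmxK m k (M : 'M[C]_(m,k)) : adjmx (adjmx M) = M.
Proof. by apply/matrixP=> i j; rewrite !adjmxE conjCK. Qed.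

Lemma adjmx_sum m k (I : finType) (F : I -> 'M[C]_(m,k)) :
  adjmx (\sum_i F i) = \sum_i adjmx (F i).
Proof.
apply/matrixP=> i j; rewrite adjmxE !summxE rmorph_sum.
by apply: eq_bigr => r _; rewrite adjmxE.
Qed.

Definition qf d (M : 'M[C]_d) (u : 'cV[C]_d) := (adjmx u *m M *m u) 0 0.

Lemma qfD d (M N : 'M[C]_d) u : qf (M + N) u = qf M u + qf N u.
Proof. by rewrite /qf mulmxDr mulmxDl mxE. Qed.
Lemma qfZ d c (M : 'M[C]_d) u : qf (c *: M) u = c * qf M u.
Proof. by rewrite /qf -scalemxAr -scalemxAl mxE. Qed.
Lemma qfB d (M N : 'M[C]_d) u : qf (M - N) u = qf M u - qf N u.
Proof. by rewrite qfD -scaleN1r qfZ mulN1r. Qed.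
Lemma qf_sum d (I : finType) (P : pred I) (F : I -> 'M[C]_d) u :
  qf (\sum_(i | P i) F i) u = \sum_(i | P i) qf (F i) u.
Proof.
rewrite /qf mulmx_sumr mulmx_suml summxE; apply: eq_bigr => i _ //.
Qed.

Lemma psd_sum d (I : finType) (P : pred I) (F : I -> 'M[C]_d) :
  (forall i, P i -> psd (F i)) -> psd (\sum_(i | P i) F i).
Proof.
move=> H; split.
  rewrite (big_morph _ (@adjmxD d d) (_ : adjmx 0 = 0)); last first.
    by apply/matrixP=> i j; rewrite adjmxE !mxE conjC0.
  by apply: eq_bigr => i /H [].
move=> u; change (0 <= qf (\sum_(i | P i) F i) u); rewrite qf_sum; apply: sumr_ge0 => i /H [_]; exact.
Qed.

Lemma conj_entry d (x y : 'cV[C]_d) : ((adjmx x *m y) 0 0)^* = (adjmx y *m x) 0 0.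
Proof.
rewrite !mxE rmorph_sum; apply: eq_bigr => r _.
rewrite !adjmxE rmorphM mulrC; congr (_ * _); exact: conjCK.
Qed.

End Aux.

End Part1.
Import Part1.

Module Part2.
Local Open Scope ring_scope.

Section Aux2.
Variable R : realType.
Local Notation C := (R[i]).

Lemma qf_expand d (P : 'M[C]_d) (u w : 'cV_d) (t : C) :
  qf P (u - t *: w) = qf P u - t * (adjmx u *m P *m w) 0 0
     - t^* * (adjmx w *m P *m u) 0 0 + t^* * t * qf P w.
Proof.
rewrite /qf adjmxB adjmxZ !mulmxBl !mulmxBr -!scalemxAl -!scalemxAr !mxE.
ring.
Qed.

Lemma key d (P : 'M[C]_d) (w u : 'cV_d) : psd P ->
  (adjmx (P *m w) *m u) 0 0 * ((adjmx (P *m w) *m u) 0 0)^* / (qf P w + 1) <= qf P u.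
Proof.
move=> [HP Hq]; set z := (adjmx (P *m w) *m u) 0 0.
set c := qf P w.
have c0 : 0 <= c by apply: Hq.
have cc : c^* = c by apply: geC0_conj.
have c1 : 0 < c + 1 by apply: (le_lt_trans c0); rewrite ltrDl ltr01.
have c1n : c + 1 != 0 by rewrite gt_eqF.
set t := z / (c + 1).
have E1 : (adjmx u *m P *m w) 0 0 = z^*.
  by rewrite -mulmxA /z conj_entry.
have E2 : (adjmx w *m P *m u) 0 0 = z.
  by rewrite /z adjmxM HP.
have := Hq (u - t *: w); rewrite -/(qf P _) qf_expand E1 E2 -/c.
have tc : t^* = z^* / (c + 1).
  rewrite /t rmorphM fmorphV; congr (_ * _ ^-1); exact: geC0_conj (ltW c1).
rewrite tc /t => H.
rewrite -subr_ge0.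
have -> : qf P u - z * z^* / (c + 1) =
   (qf P u - z / (c + 1) * z^* - z^* / (c + 1) * z + z^* / (c + 1) * (z / (c + 1)) * c)
   + z * z^* / ((c + 1) * (c + 1)).
  by field.
apply: addr_ge0 => //.
apply: mulr_ge0; first exact: mul_conjC_ge0.
by rewrite invr_ge0 mulr_ge0 // ltW.
Qed.

End Aux2.

End Part2.
Import Part2.

Module Part3.
Local Open Scope ring_scope.

Lemma cap_rank_seq (F : fieldType) d (I : eqType) (U : I -> 'M[F]_d) (s : seq I) :
  (\sum_(i <- s) \rank (U i) + d <= \rank (\bigcap_(i <- s) U i)%MS + size s * d)%N.
Proof.
elim: s => [|a s IH]; first by rewrite !big_nil mxrank1 /=; lia.
rewrite big_cons [X in (_ <= \rank X + _)%N]big_cons /=.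
have := mxrank_sum_cap (U a) (\bigcap_(i <- s) U i)%MS.
have := rank_leq_col (U a + \bigcap_(i <- s) U i)%MS.
rewrite mulSn; move: (size s * d)%N IH => k IH h1 h2.
have L : forall x1 x2 x3 x4 x5 d k : nat, (x1 <= d)%N -> (x1 + x2 = x5 + x3)%N ->
  (x4 + d <= x3 + k)%N -> (x5 + x4 + d <= x2 + (d + k))%N by move=> *; lia.
exact: L h1 h2 IH.
Qed.

Lemma cap_rank (F : fieldType) d (I : finType) (U : I -> 'M[F]_d) :
  (\sum_i \rank (U i) + d <= \rank (\bigcap_i U i)%MS + #|I| * d)%N.
Proof. by rewrite cardE enumT; apply: cap_rank_seq. Qed.

Lemma common_vec (F : fieldType) d (I : finType) (U : I -> 'M[F]_d) :
  ((#|I| - 1) * d < \sum_i \rank (U i))%N ->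
  exists v : 'rV[F]_d, v != 0 /\ forall i, (v <= U i)%MS.
Proof.
move=> H; have := cap_rank U.
set W := (\bigcap_i U i)%MS => H2.
have Wn : W != 0.
  rewrite -mxrank_eq0; apply/eqP => W0; rewrite W0 in H2.
  move: H H2; case: #|I| => [|k]; rewrite ?subSS ?subn0 /=; nia.
exists (nz_row W); split; first by rewrite nz_row_eq0.
move=> i; apply: submx_trans (nz_row_sub W) _.
by apply: (bigcapmx_inf i).
Qed.

End Part3.
Import Part3.

Module Part4.

Section Comb.
Variables (n : nat) (A X : 'I_n -> nat).
Local Notation outs := {dffun forall i : 'I_n, 'I_(A i)}.
Local Notation ins := {dffun forall i : 'I_n, 'I_(X i)}.
Definition strat := {dffun forall i : 'I_n, {ffun 'I_(X i) -> 'I_(A i)}}.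
Definition app (f : strat) (x : ins) : outs := [ffun i => f i (x i)].

Definition swp (a a' : outs) (f : strat) : strat :=
  [ffun i => [ffun y => perm.tperm (a i) (a' i) (f i y)]].

Lemma swpK a a' : cancel (swp a a') (swp a a').
Proof.
move=> f; apply/ffunP => i; apply/ffunP => y; rewrite !ffunE perm.tpermK //.
Qed.

Lemma app_swp a a' f x : app f x = a -> app (swp a a' f) x = a'.
Proof.
move=> H; apply/ffunP => i; rewrite !ffunE -H ffunE.
by rewrite perm.tpermL.
Qed.

Lemma card_fib_le x a a' :
  (#|[pred f | app f x == a]| <= #|[pred f | app f x == a']|)%N.
Proof.
rewrite -(card_imset _ (can_inj (swpK a a'))).
apply: subset_leq_card; apply/subsetP => g /imsetP [f].
by rewrite inE => /eqP /(app_swp a') H ->; rewrite inE H.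
Qed.

Lemma card_fib x a a' :
  #|[pred f | app f x == a]| = #|[pred f | app f x == a']|.
Proof. by apply/eqP; rewrite eqn_leq !card_fib_le. Qed.

Lemma fiber_sum x (F : outs -> nat) :
  (\sum_f F (app f x) = \sum_a #|[pred f | app f x == a]| * F a)%N.
Proof.
rewrite (partition_big (app^~ x) predT) //=; apply: eq_bigr => a _.
rewrite (eq_bigr (fun=> F a)); last by move=> f /eqP ->.
by rewrite sum_nat_const; congr (_ * _)%N; apply: eq_card => f; rewrite !inE.
Qed.

Lemma avg (r : outs -> ins -> nat) (B : nat) (a0 : outs) :
  (forall f, \sum_x r (app f x) x <= B)%N ->
  (\sum_a \sum_x r a x <= #|outs| * B)%N.
Proof.
move=> H.
have cS : forall x, (#|outs| * #|[pred f | app f x == a0]| = #|{: strat}|)%N.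
  move=> x; have := fiber_sum x (fun=> 1%N).
  rewrite sum1_card => ->.
  rewrite (eq_bigr (fun=> #|[pred f | app f x == a0]|)); last first.
    by move=> a _; rewrite muln1 (card_fib x a a0).
  by rewrite sum_nat_const mulnC.
have s0 : (0 < #|{: strat}|)%N.
  by apply/card_gt0P; exists [ffun i => [ffun=> a0 i]].
rewrite -(leq_pmul2l s0).
have E : (#|{: strat}| * \sum_a \sum_x r a x = #|outs| * \sum_f \sum_x r (app f x) x)%N.
  rewrite exchange_big big_distrr /= [in RHS]exchange_big big_distrr /=.
  apply: eq_bigr => x _; rewrite (fiber_sum x (r^~ x)) -(cS x) -mulnA big_distrr /=; congr (_ * _)%N.
  by apply: eq_bigr => a _; rewrite (card_fib x a a0).
rewrite E mulnCA leq_mul2l; apply/orP; right.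
have -> : (#|{: strat}| * B = \sum_(f : strat) B)%N by rewrite sum_nat_const.
by apply: leq_sum => f _; apply: H.
Qed.
End Comb.

End Part4.
Import Part4.

Module Part5.
Local Open Scope ring_scope.

Section Dec.
Variable R : realType.
Local Notation C := (R[i]).
Variables (n : nat) (A X : 'I_n -> nat) (d : nat).
Variable S : assemblage R A X d.
Variable f : strat A X.
Variables (vc : 'cV[C]_d) (w : ins X -> 'cV[C]_d).
Hypothesis NS : no_signaling S.
Hypothesis vc0 : vc != 0.
Hypothesis Hw : forall x, S (app f x) x *m w x = vc.
Variable x0 : ins X.

Lemma mul11 (u : 'M[C]_(1, d)) (v : 'M[C]_(d, 1)) (y : 'M[C]_(1,1)) :
   (u *m (v *m y)) 0 0 = (u *m v) 0 0 * y 0 0.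
Proof. by rewrite mulmxA [in LHS]mxE big_ord1. Qed.

Let T := (adjmx vc *m vc) 0 0.

Lemma T_gt0 : 0 < T.
Proof.
have E : T = \sum_k (vc k 0)^* * vc k 0.
  by rewrite /T mxE; apply: eq_bigr => k _; rewrite adjmxE.
have ge : forall k, 0 <= (vc k 0)^* * vc k 0.
  by move=> k; rewrite mulrC mul_conjC_ge0.
rewrite lt_def E sumr_ge0 // andbT; apply/eqP => H.
have := psumr_eq0P (fun k _ => ge k) H => H2.
move/eqP: vc0; apply; apply/matrixP => i j; rewrite (ord1 j) mxE.
by apply/eqP; rewrite -mul_conjC_eq0 mulrC H2.
Qed.

Let rho := T^-1 *: (vc *m adjmx vc).

Lemma T_conj : T^* = T.
Proof. exact: geC0_conj (ltW T_gt0). Qed.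

Lemma qf_rho u : qf rho u = T^-1 * ((adjmx vc *m u) 0 0 * ((adjmx vc *m u) 0 0)^*).
Proof.
rewrite /rho qfZ /qf; congr (_ * _).
by rewrite -!mulmxA mul11 -conj_entry mulrC.
Qed.

Lemma rho_herm : adjmx rho = rho.
Proof.
rewrite /rho adjmxZ adjmxM adjmxK; congr (_ *: _).
rewrite fmorphV; congr (_^-1); exact: T_conj.
Qed.

Lemma rho_density : density rho.
Proof.
split; [split|].
- exact: rho_herm.
- move=> u; rewrite -/(qf _ u) qf_rho; apply: mulr_ge0; last exact: mul_conjC_ge0.
  by rewrite invr_ge0 ltW // T_gt0.
- by rewrite /rho mxtraceZ mxtrace_mulC /mxtrace big_ord1 -/T mulVf // gt_eqF // T_gt0.
Qed.


Let P x := S (app f x) x.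
Let c x := qf (P x) (w x).
Let CC := \sum_x c x.
Let eps := T / (T + CC + 1).

Lemma psdS a x : psd (S a x).
Proof. by case: NS => H _; apply: H. Qed.

Lemma c_ge0 x : 0 <= c x.
Proof. by case: (psdS (app f x) x) => _; apply. Qed.

Lemma CC_ge0 : 0 <= CC.
Proof. by apply: sumr_ge0 => x _; apply: c_ge0. Qed.

Lemma c_le x : c x <= CC.
Proof.
rewrite /CC (bigD1 x) //= lerDl; apply: sumr_ge0 => y _; exact: c_ge0.
Qed.

Lemma D_gt0 : 0 < T + CC + 1.
Proof. apply: ltr_pwDr ltr01 _; exact: addr_ge0 (ltW T_gt0) CC_ge0. Qed.

Lemma eps_gt0 : 0 < eps.
Proof. by rewrite /eps divr_gt0 // ?T_gt0 // D_gt0. Qed.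

Lemma eps_lt1 : eps < 1.
Proof.
rewrite /eps ltr_pdivrMr ?D_gt0 // mul1r -addrA ltrDl.
exact: ltr_pwDr ltr01 CC_ge0.
Qed.

Lemma eps_conj : eps^* = eps.
Proof. exact: geC0_conj (ltW eps_gt0). Qed.

Let k := (1 - eps)^-1.

Lemma k_ge0 : 0 <= k.
Proof. by rewrite /k invr_ge0 subr_ge0 ltW // eps_lt1. Qed.

Lemma k_conj : k^* = k.
Proof. exact: geC0_conj k_ge0. Qed.

Lemma one_eps : 1 - eps != 0.
Proof. by rewrite subr_eq0 eq_sym lt_eqF // eps_lt1. Qed.

Definition S1 : assemblage R A X d := fun a x =>
  \sum_(j < 1) ((fun _ : 'I_1 => (1 : C)) j *
     \prod_i (fun (_ : 'I_1) (i : 'I_n) (y : 'I_(X i)) (b : 'I_(A i)) =>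
                 ((b == f i y)%:R : C)) j i (x i) (a i)) *: (fun _ : 'I_1 => rho) j.

Lemma S1E a x : S1 a x = ((a == app f x)%:R : C) *: rho.
Proof.
rewrite /S1 big_ord1 mul1r; congr (_ *: _).
have [->|ne] := eqVneq a (app f x).
  by apply: big1 => i _; rewrite ffunE eqxx.
have [i Hi] : exists i, a i != f i (x i).
  case: (boolP [exists i, a i != f i (x i)]) => [/existsP //|].
  rewrite negb_exists => /forallP H; move/eqP: ne; case.
  by apply/ffunP => i; rewrite ffunE; apply/eqP; move: (H i); rewrite negbK.
by rewrite (bigD1 i) //= (negbTE Hi) mul0r.
Qed.

Lemma S1_LHS : Pilot.Defs.LHS S1.
Proof.
exists 1%N, (fun _ => 1), (fun _ => rho),
  (fun (_ : 'I_1) (i : 'I_n) (y : 'I_(X i)) (b : 'I_(A i)) => ((b == f i y)%:R : C)).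
split.
- by split => [j|]; [exact: ler01 | rewrite big_ord1].
- by move=> _; exact: rho_density.
- by move=> j i y b; exact: ler0n.
- move=> j i y; rewrite (bigD1 (f i y)) //= eqxx big1 ?addr0 // => b /negbTE ->.
  by [].
- by [].
Qed.

Definition S2 : assemblage R A X d := fun a x => k *: (S a x - eps *: S1 a x).

Lemma S_decomp a x : S a x = eps *: S1 a x + (1 - eps) *: S2 a x.
Proof.
by rewrite /S2 scalerA /k mulfV ?one_eps // scale1r addrC subrK.
Qed.

Lemma S1_herm a x : adjmx (S1 a x) = S1 a x.
Proof.
rewrite S1E adjmxZ rho_herm; congr (_ *: _); exact: geC0_conj (ler0n _ _).
Qed.

Lemma psdS2 a x : psd (S2 a x).
Proof.
have [HS Hq] := psdS a x.
split.
  by rewrite /S2 adjmxZ adjmxB adjmxZ S1_herm HS k_conj eps_conj.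
move=> u; rewrite -/(qf _ u) /S2 qfZ qfB qfZ S1E qfZ.
apply: mulr_ge0; first exact: k_ge0.
rewrite subr_ge0; case: eqP => [->|_]; last first.
  by rewrite mul0r mulr0; apply: Hq.
rewrite mul1r qf_rho -/(P x).
set z := (adjmx vc *m u) 0 0.
have := key (w x) u (psdS (app f x) x); rewrite Hw -/z => Hk; apply: le_trans _ Hk.
have E : eps * T^-1 = (T + CC + 1)^-1.
  by rewrite /eps mulrAC mulfV ?mul1r // gt_eqF // T_gt0.
rewrite mulrA E mulrC.
apply: ler_wpM2l; first exact: mul_conjC_ge0.
rewrite lef_pV2 ?posrE ?D_gt0 //; last exact: ltr_pwDr ltr01 (c_ge0 x).
rewrite lerD2r; apply: le_trans (c_le x) _.
by rewrite lerDr ltW // T_gt0.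
Qed.


Lemma sumS1 x : \sum_a S1 a x = rho.
Proof.
rewrite (bigD1 (app f x)) //= S1E eqxx scale1r big1 ?addr0 // => a /negbTE Ha.
by rewrite S1E Ha scale0r.
Qed.

Lemma margS1 (I : {set 'I_n}) (a : outs A) (x : ins X) :
  \sum_(b : outs A | [forall i in I, b i == a i]) S1 b x =
  ([forall i in I, f i (x i) == a i])%:R *: rho.
Proof.
case: (boolP [forall i in I, f i (x i) == a i]) => Hc.
  rewrite (bigD1 (app f x)) /=; last first.
    by apply/forall_inP => i Hi; rewrite ffunE; exact: (forall_inP Hc i Hi).
  rewrite S1E eqxx scale1r big1 ?addr0 // => b /andP [_ /negbTE Hb].
  by rewrite S1E Hb scale0r.
rewrite scale0r big1 // => b Hb; rewrite S1E.
have [Eb|_] := eqVneq b (app f x); last by rewrite scale0r.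
rewrite Eb in Hb; move/negP: Hc; case.
by apply/forall_inP => i Hi; have := forall_inP Hb i Hi; rewrite ffunE.
Qed.

Lemma NS2 : no_signaling S2.
Proof.
have [_ [[rhoB [[Hps Htr] Hsum]] Hmarg]] := NS.
split; first exact: psdS2.
split.
  exists (k *: (rhoB - eps *: rho)).
  have sumS2 : forall x, \sum_a S2 a x = k *: (rhoB - eps *: rho).
    by move=> x; rewrite /S2 -scaler_sumr sumrB -scaler_sumr Hsum sumS1.
  split; last by move=> x; rewrite sumS2.
  split; first by rewrite -(sumS2 x0); apply: psd_sum => a _; exact: psdS2.
  have [_ trr] := rho_density.
  by rewrite mxtraceZ linearB /= mxtraceZ Htr trr mulr1 /k mulVf ?one_eps.
move=> I HI0 HIT a a' x x' H.
have Hb : [forall i in I, f i (x i) == a i] = [forall i in I, f i (x' i) == a' i].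
  by apply: eq_forallb_in => i Hi; case: (H i Hi) => -> ->.
rewrite /S2 -!scaler_sumr !sumrB -!scaler_sumr !margS1 (Hmarg I HI0 HIT a a' x x' H).
by rewrite Hb.
Qed.

Lemma not_edge : ~ on_edge S.
Proof.
move=> E; have := E eps S1 S2 _ S1_LHS NS2 S_decomp.
rewrite ltW ?eps_gt0 // ltW ?eps_lt1 // => /(_ isT) e0.
by have := eps_gt0; rewrite e0 ltxx.
Qed.

End Dec.

End Part5.
Import Part5.

Unset Implicit Arguments.
Set Strict Implicit.

Lemma card_dff n (B : 'I_n -> nat) :
  #|{dffun forall i : 'I_n, 'I_(B i)}| = (\prod_(i < n) B i)%N.
Proof.
rewrite card_dep_ffun foldrE big_map big_enum /=.
by apply: eq_bigr => i _; rewrite card_ord.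
Qed.

Theorem corollary1 (R : realType) (n : nat) (A X : 'I_n -> nat) (d : nat)
  (hn : (1 <= n)%N) (hA : forall i, (1 <= A i)%N) (hX : forall i, (1 <= X i)%N)
  (hd : (1 <= d)%N) (S : assemblage R A X d) :
  no_signaling S -> on_edge S ->
  (\sum_(a : outs A) \sum_(x : ins X) \rank (S a x) <=
     ((\prod_(i < n) X i) - 1) * (\prod_(i < n) A i) * d)%N.
Proof.
move=> NS edge.
rewrite -!card_dff.
pose a0 : outs A := [ffun i => Ordinal (hA i)].
pose x0 : ins X := [ffun i => Ordinal (hX i)].
rewrite leqNgt; apply/negP => Hlt.
have [f Hf] : exists f : strat A X,
    ((#|ins X| - 1) * d < \sum_x \rank (S (app f x) x))%N.
  case: (boolP [exists f : strat A X,
      ((#|ins X| - 1) * d < \sum_x \rank (S (app f x) x))%N]) => [/existsP //|].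
  rewrite negb_exists => /forallP Hall.
  have H : forall f : strat A X, (\sum_x \rank (S (app f x) x) <= (#|ins X| - 1) * d)%N.
    by move=> f; rewrite leqNgt; apply: Hall.
  have := @avg _ _ _ (fun a x => \rank (S a x)) ((#|ins X| - 1) * d) a0 H.
  move: Hlt.
  move: (\sum_(a : outs A) \sum_(x : ins X) \rank (S a x))%N => s.
  rewrite /outs /ins; move: (#|{dffun forall i : 'I_n, 'I_(X i)}| - 1)%N => m.
  move: (#|{dffun forall i : 'I_n, 'I_(A i)}|) => N; nia.
have HU : ((#|ins X| - 1) * d < \sum_x \rank ((S (app f x) x)^T%R))%N.
  by under eq_bigr do rewrite mxrank_tr.
have [v [v0 Hv]] := @common_vec _ _ _ (fun x => (S (app f x) x)^T%R) HU.
pose w x := ((v *m pinvmx (S (app f x) x)^T)^T)%R.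
have Hw : forall x, (S (app f x) x *m w x = v^T)%R.
  move=> x; rewrite /w -{1}(trmxK (S (app f x) x)) -trmx_mul mulmxKpV // Hv.
have vc0 : (v^T != 0)%R by rewrite trmx_eq0.
exact: (not_edge NS vc0 Hw x0 edge).
Qed.
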